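(* In the binary setting ($D,Z\in\{0,1\}$, fixed $X=x$ and $\tau$), let $\Pi$, $q$, $\partial\Pi$ be as follows: $\Pi(y)=(P[Y\le y_D\mid Z=0]-\tau,\,P[Y\le y_D\mid Z=1]-\tau)'$ with $y_D=(1-D)y_0+Dy_1$, $\Pi(q)=0$, the conditional densities $f_Y(y\mid D=d,Z=z)$ exist, and $\partial\Pi(y)$, with rows indexed by $z=0,1$ and columns by $d=0,1$ and entries $f_{Y,D}(y_d,d\mid Z=z):=f_Y(y_d\mid D=d,Z=z)P[D=d\mid Z=z]$, is a $C^1$ Jacobian of $\Pi$ on $\mathcal L$. Let $K>0$, $C=\{y\in\mathbb R^2:\|y\|_\infty\le K\}$, $H=\{(y_0,y_1)\in\mathbb R^2: y_1\ge y_0\}$, and let $\mathcal L$ be either $q+C$ or $(q+C)\cap H$. Suppose that for all $y=(y_0,y_1)\in\mathcal L$, $$\frac{f_{Y,D}(y_1,1\mid Z=1)}{f_{Y,D}(y_0,0\mid Z=1)}>\frac{f_{Y,D}(y_1,1\mid Z=0)}{f_{Y,D}(y_0,0\mid Z=0)}\quad\text{(LMR)}$$ (understood as $f_{Y,D}(y_1,1\mid Z=1)f_{Y,D}(y_0,0\mid Z=0)>f_{Y,D}(y_1,1\mid Z=0)f_{Y,D}(y_0,0\mid Z=1)$), and $$f_{Y,D}(y_1,1\mid Z=1)>0,\qquad f_{Y,D}(y_0,0\mid Z=0)>0.\quad\text{(POS)}$$ Then, taking the trivial covering $\mathcal L_1=\mathcal L$ and no row rearrangement, for every $y\in\mathcal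 L$ and every subspace $L$ spanned by a face of $\mathcal L$ containing $y$, the map $\mathrm{proj}_L\circ\partial\Pi(y):L\to L$ has positive determinant; consequently $y=q$ is the unique solution of $\Pi(y)=0$ in $\mathcal L$. Analogously, the same conclusion (after swapping the two rows of $\partial\Pi$) holds if instead, for all $y\in\mathcal L$, the reverse inequality in (LMR) holds together with $f_{Y,D}(y_1,1\mid Z=0)>0$ and $f_{Y,D}(y_0,0\mid Z=1)>0$.
   Context: A face of a polytope $\mathcal L$ is the intersection of $\mathcal L$ with a supporting hyperplane (including $\mathcal L$ itself); the subspace spanned by a nonempty face is the translation to the origin of the minimal affine subspace containing it; $\mathrm{proj}_L$ is orthogonal projection onto $L$, and determinants of maps $L\to L$ are computed in coordinates of $L$. Zero-dimensional faces (vertices) impose no condition. *)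

(* Defs.v *)
From Stdlib Require Import Reals Lra List.
Open Scope R_scope.

Definition pt := (R * R)%type.
Definition dot (u v : pt) : R := fst u * fst v + snd u * snd v.
Definition mat2 := (pt * pt)%type.
Definition mv (A : mat2) (v : pt) : pt := (dot (fst A) v, dot (snd A) v).
Definition det2 (A : mat2) : R :=
  fst (fst A) * snd (snd A) - snd (fst A) * fst (snd A).
Definition swap_rows (A : mat2) : mat2 := (snd A, fst A).

(** Index convention: false = 0, true = 1 (for d and for z). *)

Definition box (q : pt) (K : R) (y : pt) : Prop :=
  Rabs (fst y - fst q) <= K /\ Rabs (snd y - snd q) <= K.
Definition Hhalf (y : pt) : Prop := fst y <= snd y.
Definition Lset (withH : bool) (q : pt) (K : R) (y : pt) : Prop :=
  box q K y /\ (if withH then Hhalf y else True).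

Definition is_face (S F : pt -> Prop) : Prop :=
  (forall x, F x <-> S x) \/
  exists (a : pt) (b : R), a <> (0, 0) /\
    (forall x, S x -> dot a x <= b) /\
    (forall x, F x <-> (S x /\ dot a x = b)).

(** Linear subspace spanned by a face: the linear span of the differences
    u - w of points u, w of the face (translation to the origin of the
    affine hull). *)
Definition lin_comb (l : list (R * pt * pt)) : pt :=
  fold_right (fun t acc =>
     let '(c, u, w) := t in
     (fst acc + c * (fst u - fst w), snd acc + c * (snd u - snd w))) (0, 0) l.
Definition span_face (F : pt -> Prop) (v : pt) : Prop :=
  exists l : list (R * pt * pt),
    (forall c u w, In (c, u, w) l -> F u /\ F w) /\ v = lin_comb l.

(** Determinant of proj_L o A : L -> L, computed in coordinates of L.
    For L a line spanned by v <> 0, in the coordinate of the basis v the map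
    is multiplication by  <v, A v> / <v, v>. *)
Definition det_proj_line (v : pt) (A : mat2) : R := dot v (mv A v) / dot v v.

(** "det(proj_L o A |_L) > 0" for a linear subspace L of R^2.
    Subspaces of R^2 are R^2, lines R v (v <> 0), or {0}; the latter
    (vertices) imposes no condition. *)
Definition proj_det_pos (L : pt -> Prop) (A : mat2) : Prop :=
  ((forall x, L x) -> det2 A > 0) /\
  (forall v : pt, v <> (0, 0) -> (forall x, L x <-> exists c, x = (c * fst v, c * snd v)) ->
      det_proj_line v A > 0).

(** The model.  p d z = P[D=d | Z=z];
    Fc d z t = P[Y <= t | D=d, Z=z];  f d z = its density f_Y(. | D=d, Z=z). *)

(** Pi(y)_z = P[Y <= y_D | Z=z] - tau
          = sum_d P[Y <= y_d | D=d, Z=z] P[D=d | Z=z] - tau *)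
Definition PiZ (Fc : bool -> bool -> R -> R) (p : bool -> bool -> R) (tau : R)
    (z : bool) (y : pt) : R :=
  Fc false z (fst y) * p false z + Fc true z (snd y) * p true z - tau.
Definition Pi Fc p tau (y : pt) : pt := (PiZ Fc p tau false y, PiZ Fc p tau true y).

Definition fyd (f : bool -> bool -> R -> R) (p : bool -> bool -> R) d z t : R :=
  f d z t * p d z.
Definition dPi f p (y : pt) : mat2 :=
  ((fyd f p false false (fst y), fyd f p true false (snd y)),
   (fyd f p false true (fst y), fyd f p true true (snd y))).

Definition conclusion (Lp : pt -> Prop) (J : pt -> mat2) (Pif : pt -> pt) (q : pt) : Prop :=
  (forall y F, Lp y -> is_face Lp F -> F y -> proj_det_pos (span_face F) (J y)) /\
  (forall y, Lp y -> Pif y = (0, 0) -> y = q).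

(* Main.v *)
Require Import Defs.
From Stdlib Require Import Reals Lra List Classical.
Open Scope R_scope.

Lemma Lset_iff w q K a b : Lset w q K (a,b) <->
  (fst q - K <= a <= fst q + K /\ snd q - K <= b <= snd q + K /\ (w = true -> a <= b)).
Proof.
  unfold Lset, box, Hhalf; simpl.
  split.
  - intros [[H1 H2] H3]. split; [|split].
    + revert H1; unfold Rabs; destruct (Rcase_abs _); lra.
    + revert H2; unfold Rabs; destruct (Rcase_abs _); lra.
    + intros ->; exact H3.
  - intros [H1 [H2 H3]]. split; [split|].
    + unfold Rabs; destruct (Rcase_abs _); lra.
    + unfold Rabs; destruct (Rcase_abs _); lra.
    + destruct w; auto.
Qed.

Lemma cmvt (U V u v : R -> R) a b :
  (forall x, derivable_pt_lim U x (u x)) -> (forall x, derivable_pt_lim V x (v x)) ->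
  a < b -> exists c, a < c < b /\ (V b - V a) * u c = (U b - U a) * v c.
Proof.
  intros HU HV Hab.
  assert (dU : forall c, derivable_pt U c) by (intro c; exists (u c); apply HU).
  assert (dV : forall c, derivable_pt V c) by (intro c; exists (v c); apply HV).
  destruct (MVT U V a b (fun c _ => dU c) (fun c _ => dV c) Hab
     (fun c _ => derivable_continuous_pt _ _ (dU c))
     (fun c _ => derivable_continuous_pt _ _ (dV c))) as [c [P E]].
  exists c; split; [exact P|].
  rewrite (derive_pt_eq_0 _ _ _ _ (HU c)) in E.
  rewrite (derive_pt_eq_0 _ _ _ _ (HV c)) in E. exact E.
Qed.

Lemma strict_incr (U u : R -> R) a b :
  (forall x, derivable_pt_lim U x (u x)) -> a < b -> (forall c, a < c < b -> u c > 0) ->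
  U a < U b.
Proof.
  intros HU Hab Hp.
  destruct (cmvt U id u (fun _ => 1) a b HU derivable_pt_lim_id Hab) as [c [Hc E]].
  unfold id in E. specialize (Hp c Hc). nra.
Qed.

Lemma deriv_nonneg (g : R -> R) x l :
  (forall s t, s <= t -> g s <= g t) -> derivable_pt_lim g x l -> 0 <= l.
Proof.
  intros Hm Hd. destruct (Rle_or_lt 0 l) as [H|H]; [exact H|exfalso].
  destruct (Hd (-l/2) ltac:(lra)) as [del Hdel].
  pose proof (cond_pos del) as Hdp.
  assert (Hh : del/2 <> 0) by lra.
  assert (Ha : Rabs (del/2) < del) by (rewrite Rabs_right; lra).
  specialize (Hdel (del/2) Hh Ha).
  assert (Hq : 0 <= (g (x + del/2) - g x) / (del/2)).
  { unfold Rdiv. apply Rmult_le_pos. pose proof (Hm x (x+del/2) ltac:(lra)); lra.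
    left; apply Rinv_0_lt_compat; lra. }
  revert Hdel; unfold Rabs; destruct (Rcase_abs _); lra.
Qed.

Lemma deriv_scal (F : R -> R) c x l :
  derivable_pt_lim F x l -> derivable_pt_lim (fun t => F t * c) x (l * c).
Proof.
  intro H.
  pose proof (derivable_pt_lim_mult F (fct_cte c) x l 0 H (derivable_pt_lim_const c x)) as H2.
  unfold mult_fct, fct_cte in H2. replace (l * c) with (l * c + F x * 0) by ring.
  exact H2.
Qed.

Lemma uniq_core w q K (y : pt) (g00 g10 g01 g11 h00 h10 h01 h11 : R -> R) :
  (forall x, derivable_pt_lim g00 x (h00 x)) ->
  (forall x, derivable_pt_lim g10 x (h10 x)) ->
  (forall x, derivable_pt_lim g01 x (h01 x)) ->
  (forall x, derivable_pt_lim g11 x (h11 x)) ->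
  (forall s t, s <= t -> g10 s <= g10 t) ->
  (forall s t, s <= t -> g01 s <= g01 t) ->
  (forall a b, Lset w q K (a,b) -> h11 b * h00 a > h10 b * h01 a /\ h11 b > 0 /\ h00 a > 0) ->
  Lset w q K q -> Lset w q K y ->
  g00 (fst y) + g10 (snd y) = g00 (fst q) + g10 (snd q) ->
  g01 (fst y) + g11 (snd y) = g01 (fst q) + g11 (snd q) ->
  y = q.
Proof.
  intros D00 D10 D01 D11 M10 M01 HL Hq Hy E1 E2.
  destruct q as [q0 q1]; destruct y as [y0 y1]; simpl in *.
  apply Lset_iff in Hq; apply Lset_iff in Hy; simpl in Hq, Hy.
  assert (P00 : forall c, Rmin q0 y0 <= c <= Rmax q0 y0 -> h00 c > 0).
  { intros c Hc. apply (HL c (q1 + K)). apply Lset_iff; simpl.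
    unfold Rmin, Rmax in Hc; destruct (Rle_dec q0 y0); intuition lra. }
  assert (P11 : forall c, Rmin q1 y1 <= c <= Rmax q1 y1 -> h11 c > 0).
  { intros c Hc. apply (HL (q0 - K) c). apply Lset_iff; simpl.
    unfold Rmin, Rmax in Hc; destruct (Rle_dec q1 y1); intuition lra. }
  destruct (Rtotal_order y0 q0) as [Hs|[Hs|Hs]].
  -
    assert (S0 : g00 y0 < g00 q0).
    { apply (strict_incr g00 h00); auto. intros c Hc; apply P00.
      unfold Rmin, Rmax; destruct (Rle_dec q0 y0); lra. }
    destruct (Rle_or_lt y1 q1) as [Ht|Ht].
    + pose proof (M10 _ _ Ht). exfalso; lra.
    + exfalso.
      destruct (cmvt g00 g01 h00 h01 y0 q0 D00 D01 Hs) as [xi [Hxi Exi]].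
      destruct (cmvt g10 g11 h10 h11 q1 y1 D10 D11 Ht) as [eta [Heta Eeta]].
      assert (Hp : Lset w (q0,q1) K (xi, eta)).
      { apply Lset_iff; simpl; intuition lra. }
      destruct (HL _ _ Hp) as [LMR [Pa Pb]].
      set (P := g00 q0 - g00 y0) in *.
      set (Q := g01 q0 - g01 y0) in *.
      assert (EP : g10 y1 - g10 q1 = P) by (unfold P; lra).
      assert (EQ : g11 y1 - g11 q1 = Q) by (unfold Q; lra).
      rewrite EP, EQ in Eeta.
      assert (PP : P > 0) by (unfold P; lra).
      assert (P * (h11 eta * h00 xi - h10 eta * h01 xi) = 0).
      { replace (P * (h11 eta * h00 xi - h10 eta * h01 xi)) with
          ((P * h11 eta) * h00 xi - h10 eta * (P * h01 xi)) by ring.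
        rewrite <- Eeta, <- Exi. ring. }
      apply Rmult_integral in H. destruct H; lra.
  - subst y0.
    assert (g10 y1 = g10 q1) by lra.
    assert (g11 y1 = g11 q1) by lra.
    destruct (Rtotal_order y1 q1) as [Ht|[Ht|Ht]].
    + exfalso. assert (g11 y1 < g11 q1); [|lra].
      apply (strict_incr g11 h11); auto. intros c Hc; apply P11.
      unfold Rmin, Rmax; destruct (Rle_dec q1 y1); lra.
    + subst; reflexivity.
    + exfalso. assert (g11 q1 < g11 y1); [|lra].
      apply (strict_incr g11 h11); auto. intros c Hc; apply P11.
      unfold Rmin, Rmax; destruct (Rle_dec q1 y1); lra.
  -
    assert (S0 : g00 q0 < g00 y0).
    { apply (strict_incr g00 h00); auto. intros c Hc; apply P00.
      unfold Rmin, Rmax; destruct (Rle_dec q0 y0); lra. }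
    destruct (Rle_or_lt q1 y1) as [Ht|Ht].
    + pose proof (M10 _ _ Ht). exfalso; lra.
    + exfalso.
      destruct (cmvt g00 g01 h00 h01 q0 y0 D00 D01 Hs) as [xi [Hxi Exi]].
      destruct (cmvt g10 g11 h10 h11 y1 q1 D10 D11 Ht) as [eta [Heta Eeta]].
      assert (Hp : Lset w (q0,q1) K (xi, eta)).
      { apply Lset_iff; simpl; intuition lra. }
      destruct (HL _ _ Hp) as [LMR [Pa Pb]].
      set (P := g00 y0 - g00 q0) in *.
      set (Q := g01 y0 - g01 q0) in *.
      assert (EP : g10 q1 - g10 y1 = P) by (unfold P; lra).
      assert (EQ : g11 q1 - g11 y1 = Q) by (unfold Q; lra).
      rewrite EP, EQ in Eeta.
      assert (PP : P > 0) by (unfold P; lra).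
      assert (P * (h11 eta * h00 xi - h10 eta * h01 xi) = 0).
      { replace (P * (h11 eta * h00 xi - h10 eta * h01 xi)) with
          ((P * h11 eta) * h00 xi - h10 eta * (P * h01 xi)) by ring.
        rewrite <- Eeta, <- Exi. ring. }
      apply Rmult_integral in H. destruct H; lra.
Qed.

Lemma span_perp (F : pt -> Prop) a b v :
  (forall x, F x -> dot a x = b) -> span_face F v -> dot a v = 0.
Proof.
  intros HF [l [Hl ->]]. induction l as [|[[c u] w] l IH]; simpl.
  - unfold dot; simpl; ring.
  - assert (IH' : dot a (lin_comb l) = 0) by (apply IH; intros c0 u0 w0 Hin; apply (Hl c0 u0 w0); right; auto).
    destruct (Hl c u w (or_introl eq_refl)) as [Fu Fw].
    pose proof (HF u Fu); pose proof (HF w Fw).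
    revert IH' H H0. unfold dot; simpl. destruct (lin_comb l) as [x1 x2]; simpl. intros.
    destruct a as [a1 a2], u as [u1 u2], w as [w1 w2]; simpl in *.
    replace (a1 * (x1 + c * (u1 - w1)) + a2 * (x2 + c * (u2 - w2))) with
      ((a1 * x1 + a2 * x2) + c * ((a1 * u1 + a2 * u2) - (a1 * w1 + a2 * w2))) by ring.
    rewrite IH', H, H0. ring.
Qed.

Lemma nonzero_pair (F : pt -> Prop) v :
  span_face F v -> v <> (0,0) -> exists u w, F u /\ F w /\ u <> w.
Proof.
  intros [l [Hl ->]] Hv. induction l as [|[[c u] w] l IH]; simpl in *.
  - exfalso; apply Hv; reflexivity.
  - destruct (classic (u = w)) as [E|E].
    + subst w. apply IH. intros c0 u0 w0 Hin; apply (Hl c0 u0 w0); right; auto.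
      intro Z. apply Hv. rewrite Z. simpl. f_equal; ring.
    + exists u, w. destruct (Hl c u w (or_introl eq_refl)). auto.
Qed.

Lemma helper_dir w q K (a : pt) b (u v : pt) :
  Lset w q K u -> Lset w q K v -> a <> (0,0) ->
  (forall x, Lset w q K x -> dot a x <= b) -> dot a u = b -> dot a v = b ->
  fst u > fst v -> snd u < snd v -> False.
Proof.
  destruct u as [u0 u1], v as [v0 v1], a as [a1 a2], q as [q0 q1]; simpl.
  intros Hu Hv Ha Hmax Eu Ev H0 H1.
  apply Lset_iff in Hu; apply Lset_iff in Hv; simpl in *.
  unfold dot in *; simpl in *.
  assert (E : a1 * (u0 - v0) = a2 * (v1 - u1)) by lra.
  destruct (Rtotal_order a2 0) as [A|[A|A]].
  - assert (a1 < 0).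
    { destruct (Rle_or_lt 0 a1); auto. exfalso. nra. }
    specialize (Hmax (q0 - K, u1)). simpl in Hmax.
    assert (Lset w (q0,q1) K (q0 - K, u1)) by (apply Lset_iff; simpl; intuition lra).
    specialize (Hmax H2). nra.
  - subst a2. assert (a1 = 0).
    { assert (a1 * (u0 - v0) = 0) by lra. apply Rmult_integral in H. lra. }
    subst; apply Ha; reflexivity.
  - assert (a1 > 0).
    { destruct (Rle_or_lt a1 0); auto. exfalso. nra. }
    specialize (Hmax (u0, q1 + K)). simpl in Hmax.
    assert (Lset w (q0,q1) K (u0, q1 + K)) by (apply Lset_iff; simpl; intuition lra).
    specialize (Hmax H2). nra.
Qed.

Lemma face_dir w q K F v :
  is_face (Lset w q K) F -> span_face F v -> v <> (0,0) ->
  (forall x, span_face F x <-> exists c, x = (c * fst v, c * snd v)) ->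
  0 < K -> Lset w q K q ->
  fst v * snd v >= 0.
Proof.
  intros [HF|[a [b [Ha [Hmax HF]]]]] Hsp Hv Hline HK Hq.
  - exfalso. destruct q as [q0 q1].
    assert (S1 : span_face F (K, 0)).
    { exists ((1, (q0,q1), (q0 - K, q1)) :: nil). split.
      - intros c u w' [E|[]]. inversion E; subst. split; apply HF; auto.
        apply Lset_iff; apply Lset_iff in Hq; simpl in *; intuition lra.
      - simpl. f_equal; ring. }
    assert (S2 : span_face F (0, K)).
    { exists ((1, (q0,q1 + K), (q0, q1)) :: nil). split.
      - intros c u w' [E|[]]. inversion E; subst. split; apply HF; auto.
        apply Lset_iff; apply Lset_iff in Hq; simpl in *; intuition lra.
      - simpl. f_equal; ring. }
    apply Hline in S1; apply Hline in S2.
    destruct S1 as [c1 E1], S2 as [c2 E2]. inversion E1; inversion E2.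
    destruct v as [v1 v2]; simpl in *.
    assert (c1 <> 0) by (intro; subst; lra).
    assert (c2 <> 0) by (intro; subst; lra).
    assert (v2 = 0). { symmetry in H1. apply Rmult_integral in H1. tauto. }
    assert (v1 = 0). { symmetry in H2. apply Rmult_integral in H2. tauto. }
    subst; apply Hv; reflexivity.
  - destruct (nonzero_pair F v Hsp Hv) as [u [u' [Fu [Fu' Ne]]]].
    assert (Hu : Lset w q K u /\ dot a u = b) by (apply HF; auto).
    assert (Hu' : Lset w q K u' /\ dot a u' = b) by (apply HF; auto).
    assert (Dsign : (fst u - fst u') * (snd u - snd u') >= 0).
    { destruct (Rle_or_lt 0 ((fst u - fst u') * (snd u - snd u'))) as [G|G]; [lra|exfalso].
      destruct (Rlt_or_le (fst u') (fst u)).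
      - apply (helper_dir w q K a b u u'); try tauto. nra.
      - apply (helper_dir w q K a b u' u); try tauto.
        + destruct (Req_dec (fst u') (fst u)). rewrite H0 in G. nra. lra.
        + nra. }
    assert (Pv : dot a v = 0).
    { apply (span_perp F a b); auto. intros x Fx; apply HF; auto. }
    set (d1 := fst u - fst u') in *. set (d2 := snd u - snd u') in *.
    assert (Pd : dot a (d1, d2) = 0).
    { unfold dot, d1, d2 in *; simpl. destruct Hu as [_ E1], Hu' as [_ E2]. lra. }
    assert (Dn : d1 * d1 + d2 * d2 > 0).
    { destruct (Req_dec d1 0); destruct (Req_dec d2 0).
      - exfalso. apply Ne. destruct u, u'; unfold d1, d2 in *; simpl in *.
        f_equal; lra.
      - nra. - nra. - nra. }
    destruct a as [a1 a2], v as [v1 v2]; unfold dot in *; simpl in *.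
    assert (An : a1 * a1 + a2 * a2 > 0).
    { destruct (Req_dec a1 0); destruct (Req_dec a2 0).
      - exfalso; subst; apply Ha; reflexivity.
      - nra. - nra. - nra. }
    assert (Cr : v1 * d2 - v2 * d1 = 0).
    { assert (Z : (a1 * a1 + a2 * a2) * (v1 * d2 - v2 * d1) = 0).
      { replace ((a1 * a1 + a2 * a2) * (v1 * d2 - v2 * d1)) with
          ((a1 * v1 + a2 * v2) * (a1 * d2 - a2 * d1) - (a1 * d1 + a2 * d2) * (a1 * v2 - a2 * v1))
          by ring.
        rewrite Pv, Pd. ring. }
      apply Rmult_integral in Z. lra. }
    assert (Z2 : v1 * v2 * (d1 * d1 + d2 * d2) = (v1 * v1 + v2 * v2) * (d1 * d2)).
    { apply Rminus_diag_uniq.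
      replace (v1 * v2 * (d1 * d1 + d2 * d2) - (v1 * v1 + v2 * v2) * (d1 * d2)) with
        ((v2 * d1 - v1 * d2) * (v1 * d1 - v2 * d2)) by ring.
      replace (v2 * d1 - v1 * d2) with 0 by lra. ring. }
    assert (0 <= (v1 * v1 + v2 * v2) * (d1 * d2)) by (apply Rmult_le_pos; nra).
    nra.
Qed.

Lemma conc_generic w q K (J : pt -> mat2) Pif :
  (forall y, Lset w q K y -> det2 (J y) > 0 /\ fst (fst (J y)) > 0 /\ snd (snd (J y)) > 0
      /\ snd (fst (J y)) >= 0 /\ fst (snd (J y)) >= 0) ->
  (forall y, Lset w q K y -> Pif y = (0,0) -> y = q) -> 0 < K -> Lset w q K q ->
  conclusion (Lset w q K) J Pif q.
Proof.
  intros HJ HU HK Hq. split; [|exact HU].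
  intros y F Hy HF Fy. destruct (HJ y Hy) as [Hd [Ha [Hdd [Hb Hc]]]].
  split; [intros; exact Hd|].
  intros v Hv Hline.
  assert (Sv : span_face F v) by (apply Hline; exists 1; destruct v; simpl; f_equal; ring).
  pose proof (face_dir w q K F v HF Sv Hv Hline HK Hq) as Hvv.
  destruct (J y) as [[a b] [c d]]; simpl in *.
  destruct v as [v1 v2]; unfold det_proj_line, dot, mv, dot; simpl in *.
  assert (Vn : v1 * v1 + v2 * v2 > 0).
  { destruct (Req_dec v1 0); destruct (Req_dec v2 0).
    - exfalso; subst; apply Hv; reflexivity.
    - nra. - nra. - nra. }
  unfold Rdiv. apply Rmult_lt_0_compat; [|apply Rinv_0_lt_compat; lra].
  assert (a * (v1 * v1) + d * (v2 * v2) > 0).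
  { destruct (Req_dec v1 0).
    - subst. assert (v2 * v2 > 0) by lra. nra.
    - assert (v1 * v1 > 0) by nra. nra. }
  assert ((b + c) * (v1 * v2) >= 0) by nra.
  nra.
Qed.

Theorem mainTheorem5
  (Fc f : bool -> bool -> R -> R) (p : bool -> bool -> R) (tau K : R)
  (q : pt) (withH : bool)
  (Hp01 : forall d z, 0 <= p d z <= 1)
  (Hpsum : forall z, p false z + p true z = 1)
  (HF01 : forall d z t, 0 <= Fc d z t <= 1)
  (HFmono : forall d z s t, s <= t -> Fc d z s <= Fc d z t)
  (Hdens : forall d z t, derivable_pt_lim (Fc d z) t (f d z t))
  (Hcont : forall y, Lset withH q K y -> forall z,
       continuity_pt (f false z) (fst y) /\ continuity_pt (f true z) (snd y))
  (HK : 0 < K)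
  (HqL : Lset withH q K q)
  (Hq : Pi Fc p tau q = (0, 0)) :
  ((forall y, Lset withH q K y ->
      fyd f p true true (snd y) * fyd f p false false (fst y) >
      fyd f p true false (snd y) * fyd f p false true (fst y) /\
      fyd f p true true (snd y) > 0 /\ fyd f p false false (fst y) > 0) ->
   conclusion (Lset withH q K) (dPi f p) (Pi Fc p tau) q) /\
  ((forall y, Lset withH q K y ->
      fyd f p true true (snd y) * fyd f p false false (fst y) <
      fyd f p true false (snd y) * fyd f p false true (fst y) /\
      fyd f p true false (snd y) > 0 /\ fyd f p false true (fst y) > 0) ->
   conclusion (Lset withH q K) (fun y => swap_rows (dPi f p y)) (Pi Fc p tau) q).
Proof.
  set (g := fun d z x => Fc d z x * p d z).
  assert (Dg : forall d z x, derivable_pt_lim (g d z) x (fyd f p d z x)).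
  { intros d z x. unfold g, fyd. apply deriv_scal, Hdens. }
  assert (Mg : forall d z s t, s <= t -> g d z s <= g d z t).
  { intros d z s t H. unfold g. apply Rmult_le_compat_r. apply Hp01. apply HFmono; exact H. }
  assert (Nf : forall d z x, fyd f p d z x >= 0).
  { intros d z x. apply Rle_ge. apply (deriv_nonneg (g d z) x); auto. }
  assert (Eq : forall y, Pi Fc p tau y = (0,0) -> forall z,
     g false z (fst y) + g true z (snd y) = tau).
  { intros y E z. unfold Pi, PiZ in E. inversion E. unfold g.
    destruct z; lra. }
  split; intro HL.
  - apply conc_generic; auto.
    + intros y Hy. destruct (HL y Hy) as [A [B C]]. unfold dPi, det2; simpl.
      repeat split; try lra; apply Nf.
    + intros y Hy E.
      apply (uniq_core withH q K y (g false false) (g true false) (g false true) (g true true)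
        (fyd f p false false) (fyd f p true false) (fyd f p false true) (fyd f p true true));
        auto.
      * intros a b Hab. apply (HL (a,b) Hab).
      * rewrite (Eq y E false), (Eq q Hq false); reflexivity.
      * rewrite (Eq y E true), (Eq q Hq true); reflexivity.
  - apply conc_generic; auto.
    + intros y Hy. destruct (HL y Hy) as [A [B C]]. unfold swap_rows, dPi, det2; simpl.
      repeat split; try lra; apply Nf.
    + intros y Hy E.
      apply (uniq_core withH q K y (g false true) (g true true) (g false false) (g true false)
        (fyd f p false true) (fyd f p true true) (fyd f p false false) (fyd f p true false));
        auto.
      * intros a b Hab. destruct (HL (a,b) Hab) as [A [B C]]; simpl in *. repeat split; lra.
      * rewrite (Eq y E true), (Eq q Hq true); reflexivity.
      * rewrite (Eq y E false), (Eq q Hq false); reflexivity.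
Qed.
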